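(* Let $d,m\in\mathbb{Z}^+$, $n\in\mathbb{N}$, $r\in\mathbb{Z}$, and let $f$ be any function from $\mathbb{Z}$ to $\mathbb{C}$. Then $$\sum_{k\equiv r\ (\mathrm{mod}\ d)}\binom nk(-1)^kf\Big(\Big\lfloor\frac{k-r}m\Big\rfloor\Big)=\sum_{j=0}^{n}\binom nj\Bigg(\sum_{i\equiv r\ (\mathrm{mod}\ d)}\binom ji(-1)^i\Bigg)\sum_{i=0}^{m-1}\sigma_{ij},$$ where $$\sigma_{ij}=\sum_{k\equiv r+i-j\ (\mathrm{mod}\ m)}\binom{n-j}k(-1)^kf\Big(\frac{k-(r+i-j)}m\Big).$$
   Context: All sums over residue classes run over all integers in the class, with $\binom Nk=0$ unless $0\le k\le N$. *)

(* Defs.v *)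
From HB Require Import structures.
From mathcomp Require Import all_boot all_order all_algebra.
Set Implicit Arguments. Unset Strict Implicit. Unset Printing Implicit Defensive.
Import Order.TTheory GRing.Theory Num.Theory.
Local Open Scope ring_scope.

(* Residue-class sums over ALL integers k with binomial weight 'C(N,k),
   where 'C(N,k) = 0 unless 0 <= k <= N: only k = 0..N contribute, so the sum
   over the class is literally the finite sum below. *)

Definition sigma (C : numClosedFieldType) (n m : nat) (r : int)
    (f : int -> C) (i j : nat) : C :=
  \sum_(0 <= k < (n - j).+1 |
        ((k%:Z) == r + i%:Z - j%:Z %[mod m%:Z])%Z)
    'C(n - j, k)%:R * (-1) ^+ k * f ((k%:Z - (r + i%:Z - j%:Z)) %/ m%:Z)%Z.

(* Main.v *)
Require Import Defs.
From HB Require Import structures.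
From mathcomp Require Import all_boot all_order all_algebra.
From mathcomp Require Import ring zify.
Import Order.TTheory GRing.Theory Num.Theory.
Local Open Scope ring_scope.

Lemma binC (n j l : nat) : (j <= l)%N -> (l <= n)%N ->
  ('C(n, j) * 'C(n - j, l - j) = 'C(n, l) * 'C(l, j))%N.
Proof.
move=> hjl hln.
have hpos : (0 < j`! * (l - j)`! * (n - l)`!)%N by rewrite !muln_gt0 !fact_gt0.
apply/eqP; rewrite -(eqn_pmul2r hpos); apply/eqP.
have e1 := bin_fact (leq_trans hjl hln).
have e2 : (n - j - (l - j) = n - l)%N by rewrite subnBA // subnK // (leq_trans hjl hln).
have e3 := bin_fact (leq_sub2r j hln). rewrite e2 in e3.
have e4 := bin_fact hjl. have e5 := bin_fact hln.
transitivity ('C(n, j) * (j`! * ('C(n - j, l - j) * ((l - j)`! * (n - l)`!))))%N.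
  by rewrite !mulnA; congr (_ * _)%N; rewrite -!mulnA; congr (_ * _)%N; rewrite mulnCA.
rewrite e3 e1.
transitivity ('C(n, l) * (('C(l, j) * (j`! * (l - j)`!)) * (n - l)`!))%N.
  by rewrite e4 e5.
by rewrite !mulnA.
Qed.


Lemma tri {C : numClosedFieldType} (N : nat) (F : nat -> nat -> C) :
  \sum_(0 <= j < N.+1) \sum_(0 <= k < (N - j).+1) F j k
  = \sum_(0 <= l < N.+1) \sum_(0 <= j < l.+1) F j (l - j)%N.
Proof.
elim: N F => [|N IH] F.
  by rewrite !big_nat1.
rewrite big_nat_recl // subn0.
under eq_bigr do rewrite subSS.
rewrite (IH (fun j k => F j.+1 k)).
rewrite [in RHS]big_nat_recl // big_nat1.
under [in RHS]eq_bigr do rewrite big_nat_recl // subn0.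
rewrite big_split /= addrA; congr (_ + _).
by rewrite big_nat_recl.
Qed.

Lemma widen {C : numClosedFieldType} (a b : nat) (F : nat -> C) : (a <= b)%N ->
  (forall i, (a <= i)%N -> F i = 0) ->
  \sum_(0 <= i < a) F i = \sum_(0 <= i < b) F i.
Proof.
move=> hab hF; rewrite [in RHS](big_cat_nat (n:=a)) //=.
rewrite [X in _ = _ + X]big1_seq ?addr0 // => i /andP[_].
by rewrite mem_index_iota => /andP[/hF].
Qed.


Lemma sumalt {C : numClosedFieldType} (N : nat) :
  \sum_(0 <= j < N.+1) 'C(N, j)%:R * (-1) ^+ (N - j) = (N == 0%N)%:R :> C.
Proof.
have := exprDn (-1 : C) 1 N; rewrite addNr expr0n => ->.
rewrite big_mkord; apply: eq_bigr => j _.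
by rewrite expr1n mulr1 mulr_natl.
Qed.

Lemma alt {C : numClosedFieldType} (l i : nat) : (i <= l)%N ->
  \sum_(0 <= j < l.+1) 'C(l, j)%:R * 'C(j, i)%:R * (-1) ^+ (l - j) = (i == l)%:R :> C.
Proof.
move=> hil.
rewrite (big_cat_nat (n:=i)) //=; last by rewrite ltnW // ltnS.
rewrite big1_seq ?add0r; last first.
  move=> j /andP[_]; rewrite mem_index_iota => /andP[_ hj].
  by rewrite (bin_small hj) mulr0 mul0r.
rewrite -{1}(add0n i) big_addn subSn //.
rewrite (eq_big_nat _ _ (F2 := fun j => 'C(l, i)%:R * ('C(l - i, j)%:R * (-1) ^+ (l - i - j)))); last first.
  move=> j /andP[_ hj].
  have hji : (j + i <= l)%N by move: hj hil; clear; lia.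
  rewrite -natrM -(@binC l i (j+i) (leq_addl j i) hji) addnK natrM mulrA subnDA.
  by rewrite subnAC.
rewrite -big_distrr /= sumalt subn_eq0.
case: ltngtP hil => // [hlt _|-> _]; first by rewrite mulr0.
by rewrite binn mul1r.
Qed.

Lemma inv {C : numClosedFieldType} (P : pred nat) (l : nat) :
  \sum_(0 <= j < l.+1) 'C(l, j)%:R * (-1) ^+ (l - j)
     * (\sum_(0 <= i < j.+1 | P i) 'C(j, i)%:R * (-1) ^+ i)
  = if P l then (-1) ^+ l else 0 :> C.
Proof.
rewrite (eq_big_nat _ _ (F2 := fun j => \sum_(0 <= i < l.+1) 'C(l, j)%:R * (-1) ^+ (l - j) * (if P i then 'C(j, i)%:R * (-1) ^+ i else 0))); last first.
  move=> j /andP[_ hj]; rewrite big_mkcond /= big_distrr /=.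
  apply: widen => // i hi.
  by case: (P i); rewrite ?(bin_small hi) ?mul0r ?mulr0.
rewrite exchange_big /=.
rewrite (eq_big_nat _ _ (F2 := fun i => if P i then (-1)^+i * (i == l)%:R else 0)); last first.
  move=> i /andP[_ hi]; rewrite ltnS in hi.
  case: (P i).
    rewrite -(@alt C l i hi) big_distrr /=; apply: eq_bigr => j _; ring.
  by rewrite big1 // => j _; rewrite mulr0.
rewrite big_nat_recr //= big1_seq ?add0r.
  by case: (P l); rewrite ?eqxx ?mulr1.
move=> i /andP[_]; rewrite mem_index_iota => /andP[_ hi].
by rewrite (ltn_eqF hi); case: (P i); rewrite ?mulr0.
Qed.

Lemma single {C : numClosedFieldType} (m i0 : nat) (c : C) : (i0 < m)%N ->
  \sum_(0 <= i < m) (if i == i0 then c else 0) = c.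
Proof.
move=> hi.
rewrite (big_cat_nat (n:=i0)) //=; last exact: ltnW.
rewrite (big_cat_nat (m:=i0) (n:=i0.+1)) //= big_nat1 eqxx.
rewrite !big1_seq ?add0r ?addr0 // => i /andP[_]; rewrite mem_index_iota => /andP[h1 h2].
  by rewrite gtn_eqF.
by rewrite ltn_eqF.
Qed.

Lemma sumsig {C : numClosedFieldType} (n m : nat) (r : int) (f : int -> C) (j : nat) : (0 < m)%N ->
  \sum_(0 <= i < m) sigma n m r f i j
  = \sum_(0 <= k < (n - j).+1) 'C(n - j, k)%:R * (-1) ^+ k * f ((((k + j)%N)%:Z - r) %/ m%:Z)%Z.
Proof.
move=> hm; rewrite /sigma.
under eq_bigr do rewrite big_mkcond /=.
rewrite exchange_big /=; apply: eq_bigr => k _.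
set x : int := (((k + j)%N)%:Z - r).
have hm0 : (m%:Z != 0) by rewrite eqz_nat -lt0n.
set i0 := `|(x %% m%:Z)%Z|%N.
have hx0 : (x %% m%:Z)%Z = i0%:Z by rewrite /i0 gez0_abs // modz_ge0.
have hi0 : (i0 < m)%N by rewrite -ltz_nat -hx0 ltz_pmod // ltz_nat.
rewrite (eq_big_nat _ _ (F2 := fun i => if i == i0 then
     'C(n - j, k)%:R * (-1) ^+ k * f (x %/ m%:Z)%Z else 0)); first exact: single.
move=> i /andP[_ hi].
have key : (((k%:Z) == r + i%:Z - j%:Z %[mod m%:Z])%Z) = (i == i0).
  rewrite eqz_mod_dvd.
  have -> : k%:Z - (r + i%:Z - j%:Z) = x - i%:Z by rewrite /x PoszD; ring.
  rewrite -eqz_mod_dvd hx0 (modz_small (m:=i%:Z)) 1?eq_sym ?eqz_nat //.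
rewrite key; case: eqP => // ->.
congr (_ * f _).
have -> : k%:Z - (r + i0%:Z - j%:Z) = (x %/ m%:Z)%Z * m%:Z.
  have hx : x = k%:Z + j%:Z - r by rewrite /x PoszD.
  have h := divz_eq x m%:Z; rewrite {1}hx in h.
  rewrite -hx0; move: h; generalize (x %/ m%:Z)%Z (x %% m%:Z)%Z => q s h.
  rewrite (_ : q * m%:Z = k%:Z + j%:Z - r - s); first ring.
  rewrite h; ring.
by rewrite mulzK.
Qed.

Theorem lemma2p3 (C : numClosedFieldType) (d m n : nat) (r : int)
    (f : int -> C) (hd : (0 < d)%N) (hm : (0 < m)%N) :
  \sum_(0 <= k < n.+1 | ((k%:Z) == r %[mod d%:Z])%Z)
      'C(n, k)%:R * (-1) ^+ k * f ((k%:Z - r) %/ m%:Z)%Z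
  = \sum_(0 <= j < n.+1)
      'C(n, j)%:R
      * (\sum_(0 <= i < j.+1 | ((i%:Z) == r %[mod d%:Z])%Z) 'C(j, i)%:R * (-1) ^+ i)
      * (\sum_(0 <= i < m) sigma n m r f i j).
Proof.
under [RHS]eq_bigr => j _ do rewrite (sumsig _ _ _ _ _ hm) big_distrr /=.
rewrite tri big_mkcond /=.
apply: eq_big_nat => l /andP[_ hl]; rewrite ltnS in hl.
set A := fun j : nat => \sum_(0 <= i < j.+1 | ((i%:Z) == r %[mod d%:Z])%Z) 'C(j, i)%:R * (-1) ^+ i : C.
transitivity (\sum_(0 <= j < l.+1) 'C(n, l)%:R * ('C(l, j)%:R * (-1) ^+ (l - j) * A j) * f ((l%:Z - r) %/ m%:Z)%Z).
  rewrite -big_distrl -big_distrr /= /A.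
  rewrite (inv (fun i : nat => ((i%:Z) == r %[mod d%:Z])%Z)).
  by case: ifP => _; rewrite ?mulr0 ?mul0r.
apply: eq_big_nat => j /andP[_ hj]; rewrite ltnS in hj.
rewrite subnK //.
have := @binC n j l hj hl => /(congr1 (fun x : nat => x%:R : C)); rewrite !natrM => e.
rewrite /A -/(A j).
transitivity ('C(n, l)%:R * 'C(l, j)%:R * (-1) ^+ (l - j) * A j * f ((l%:Z - r) %/ m%:Z)%Z); first ring.
rewrite -e; ring.
Qed.
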